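(* In the endogenous-network setting described in the context, let $(\delta,\xi)$ be an equilibrium of the endogenous friend game that involves at least two degrees. Then $\delta$ is nondecreasing on $S$, and for every $\theta\in S$ with $\delta(\theta)>0$, $$\xi(\theta)>x^{friend}_{\perp}(\theta,\delta(\theta))>x^{soc}_{end}(\theta,\delta(\theta))=x^{soc}_{\perp}(\theta,\delta(\theta)).$$
   Context: Fix an integer $n\ge2$, parameters $a>0$, $\phi\in\mathbb{R}$, $c>a(n-1)$ and $k>a(n-1)$. Agents' types are i.i.d. draws from an atomless probability distribution $F$ with compact support $S\subset[0,\infty)$; $\mathrm{E}$ denotes expectation with $\theta\sim F$. A symmetric pure-strategy profile is a pair of measurable functions $\delta:S\to\{0,1,\dots,n-1\}$ (degree choice) and bounded $\xi:S\to[0,\infty)$ (action choice) with $\mathrm{E}[\delta(\theta)]>0$; for bounded measurable $h$ on $S$ write $\widetilde{\mathrm{E}}[h(\theta)]=\mathrm{E}[\delta(\theta)h(\theta)]/\mathrm{E}[\delta(\theta)]$ (expectation over a neighbor). The profile is an equilibrium of the endogenous friend game if for every $\theta\in S$, the pair $(\delta(\theta),\xi(\theta))$ maximizes over $(d',y)\in\{0,\dots,n-1\}\times[0,\infty)$ the payoff $\theta y+a\,y\,d'\,\widetilde{\mathrm{E}}[\xi(\theta_j)]-\frac{c}{2}y^2-\phi(n-1)\mathrm{E}[\xi(\theta_j)]-\frac{k}{2}d'^2$. It involves at least two degrees if $\delta(\theta)$ takes at least two distinct values, each with positive $F$-probability. Comparison games: for a probability distribution $Q$ on $S\times\{0,\dots,n-1\}$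 of a pair $(\theta,D)$ with $\mathrm{E}_Q[D]>0$, let $\widetilde{\mathrm{E}}_Q[h(\theta,D)]=\mathrm{E}_Q[D\,h(\theta,D)]/\mathrm{E}_Q[D]$. A bounded measurable $z:S\times\{0,\dots,n-1\}\to[0,\infty)$ is an equilibrium of the friend game for $Q$ if for every $(\theta,d)$, $z(\theta,d)$ maximizes $\theta y+a\,y\,d\,\widetilde{\mathrm{E}}_Q[z(\theta',D')]-\frac{c}{2}y^2$ over $y\ge0$; it is an equilibrium of the society-wide game for $Q$ if the same holds with $\mathrm{E}_Q$ in place of $\widetilde{\mathrm{E}}_Q$. Since $c>a(n-1)$, each such game has a unique equilibrium. Let $Q_{end}$ be the law of $(\theta,\delta(\theta))$ with $\theta\sim F$, and $Q_\perp$ the product of $F$ and the law of $\delta(\theta)$. Then $x^{friend}_\perp$ is the equilibrium of the friend game for $Q_\perp$, and $x^{soc}_{end}$, $x^{soc}_\perp$ are the equilibria of the society-wide game for $Q_{end}$ and $Q_\perp$ respectively. *)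

(* Defs.v *)
From mathcomp Require Import all_boot all_order all_algebra.
From mathcomp Require Import all_classical all_reals all_analysis.
Import Order.TTheory GRing.Theory Num.Theory.
Import numFieldNormedType.Exports.
Local Open Scope classical_set_scope.
Local Open Scope ring_scope.

Set Implicit Arguments.
Unset Strict Implicit.
Unset Printing Implicit Defensive.

(* Support of a probability distribution F on R: the set of points all of
   whose open neighbourhoods have positive F-mass (the smallest closed set
   of full measure). *)
Definition supp {R : realType} (F : probability R R) : set R :=
  [set x | forall e : R, 0 < e -> (0 < F (ball x e))%E].

(* E[h(theta)], theta ~ F  (integration over the support S). *)
Definition EF {R : realType} (F : probability R R) (h : R -> R) : R :=
  Rintegral F (supp F) h.

(* Expectation over a neighbour: E[delta h] / E[delta]. *)
Definition Etil {R : realType} (F : probability R R) (delta : R -> nat)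
  (h : R -> R) : R :=
  EF F (fun x => (delta x)%:R * h x) / EF F (fun x => (delta x)%:R).

Definition payoff_end {R : realType} (n : nat) (a c k phi : R)
  (F : probability R R) (delta : R -> nat) (xi : R -> R)
  (theta : R) (d : nat) (y : R) : R :=
  theta * y + a * y * d%:R * Etil F delta xi - c / 2 * y ^+ 2
  - phi * (n.-1)%:R * EF F xi - k / 2 * (d%:R) ^+ 2.

Definition end_friend_eq {R : realType} (n : nat) (a c k phi : R)
  (F : probability R R) (delta : R -> nat) (xi : R -> R) : Prop :=
  [/\ measurable_fun (supp F) (fun x => ((delta x)%:R : R))
      /\ measurable_fun (supp F) xi,
      (exists M : R, forall x, supp F x -> `|xi x| <= M),
      (forall x, supp F x -> (delta x < n)%N /\ 0 <= xi x),
      0 < EF F (fun x => (delta x)%:R) &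
      forall theta, supp F theta ->
        forall (d : nat) (y : R), (d < n)%N -> 0 <= y ->
          payoff_end n a c k phi F delta xi theta d y
          <= payoff_end n a c k phi F delta xi theta (delta theta) (xi theta)].

Definition two_degrees {R : realType} (F : probability R R)
  (delta : R -> nat) : Prop :=
  exists d1 d2 : nat, d1 <> d2 /\
    (0 < F (supp F `&` [set x | delta x = d1]))%E /\
    (0 < F (supp F `&` [set x | delta x = d2]))%E.

(* Comparison games.  A distribution Q of (theta, D) on S x {0,..,n-1} is
   represented by its expectation functional h |-> E_Q[h(theta, D)]. *)

(* Q_end = law of (theta, delta theta), theta ~ F. *)
Definition EQ_end {R : realType} (F : probability R R) (delta : R -> nat)
  (h : R -> nat -> R) : R :=
  EF F (fun x => h x (delta x)).

(* Q_perp = F (x) law of delta(theta):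
   E[h] = sum_d P(delta = d) * E_F[h(theta, d)]. *)
Definition EQ_perp {R : realType} (n : nat) (F : probability R R)
  (delta : R -> nat) (h : R -> nat -> R) : R :=
  \sum_(d < n) EF F (fun x => if delta x == d then 1 else 0)
                 * EF F (fun x => h x d).

Definition EQtil {R : realType} (EQ : (R -> nat -> R) -> R)
  (h : R -> nat -> R) : R :=
  EQ (fun x d => d%:R * h x d) / EQ (fun x d => d%:R).

Definition admissible_z {R : realType} (n : nat) (F : probability R R)
  (z : R -> nat -> R) : Prop :=
  [/\ forall d, (d < n)%N -> measurable_fun (supp F) (z ^~ d),
      (exists M : R, forall x d, supp F x -> (d < n)%N -> `|z x d| <= M) &
      forall x d, supp F x -> (d < n)%N -> 0 <= z x d].

Definition friend_eq {R : realType} (n : nat) (a c : R)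
  (F : probability R R) (EQ : (R -> nat -> R) -> R) (z : R -> nat -> R) :=
  admissible_z n F z /\
  forall theta d, supp F theta -> (d < n)%N -> forall y : R, 0 <= y ->
    theta * y + a * y * d%:R * EQtil EQ z - c / 2 * y ^+ 2
    <= theta * z theta d + a * z theta d * d%:R * EQtil EQ z
       - c / 2 * (z theta d) ^+ 2.

Definition soc_eq {R : realType} (n : nat) (a c : R)
  (F : probability R R) (EQ : (R -> nat -> R) -> R) (z : R -> nat -> R) :=
  admissible_z n F z /\
  forall theta d, supp F theta -> (d < n)%N -> forall y : R, 0 <= y ->
    theta * y + a * y * d%:R * EQ z - c / 2 * y ^+ 2
    <= theta * z theta d + a * z theta d * d%:R * EQ z
       - c / 2 * (z theta d) ^+ 2.

(* Main.v *)
Require Import Defs.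
From mathcomp Require Import all_boot all_order all_algebra.
From mathcomp Require Import all_classical all_reals all_analysis.
From mathcomp Require Import lra ring.
Import Order.TTheory GRing.Theory Num.Theory.
Import numFieldNormedType.Exports.
Local Open Scope classical_set_scope.
Local Open Scope ring_scope.
Set Implicit Arguments.
Unset Strict Implicit.
Unset Printing Implicit Defensive.
Section Meas.
Context {R : realType} (F : probability R R).

Lemma supp_closed : closed (supp F).
Proof.
move=> x clx e e0.
have e20 : 0 < e / 2 by rewrite divr_gt0.
have [y [Dy bxy]] := clx (ball x (e/2)) (nbhsx_ballx x _ e20).
apply: (lt_le_trans (Dy _ e20)); apply: le_measure; rewrite ?inE.
- exact: measurable_realfun.measurable_ball.
- exact: measurable_realfun.measurable_ball.
by move=> z; apply: ball_split.
Qed.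
End Meas.
Section Meas2.
Context {R : realType} (F : probability R R).

Lemma supp_meas : measurable (supp F).
Proof. apply: measurable_realfun.closed_measurable; exact: supp_closed. Qed.

Let r_ (m : nat) : R := m.+1%:R^-1.

Let G (k : nat) : set R := [set y | exists q m, @unpickle (rat * nat)%type k = Some (q, m) /\
   F (ball (ratr q : R) (r_ m)) = 0%E /\ ball (ratr q : R) (r_ m) y].

Let G_negl k : F.-negligible (G k).
Proof.
case Hk: (@unpickle (rat * nat)%type k) => [[q m]|]; last first.
  apply: (negligibleS (A := set0)); last exact: negligible_set0.
  by move=> y [q [m [+ _]]]; rewrite Hk.
have [H0|H0] := pselect (F (ball (ratr q : R) (r_ m)) = 0%E).
  apply: (negligibleS (A := ball (ratr q : R) (r_ m))).
    by move=> y [q' [m' [+ [_ +]]]]; rewrite Hk => -[<- <-].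
  by apply/negligibleP => //; exact: measurable_realfun.measurable_ball.
apply: (negligibleS (A := set0)); last exact: negligible_set0.
by move=> y [q' [m' [+ [+ _]]]]; rewrite Hk => -[<- <-].
Qed.

Let cover : ~` supp F `<=` \bigcup_k G k.
Proof.
move=> x /= nx.
have [e [e0 Fe]] : exists e : R, 0 < e /\ F (ball x e) = 0%E.
  apply: contrapT => hne; apply: nx => e e0.
  rewrite lt_def measure_ge0 andbT; apply/eqP => h.
  by apply: hne; exists e; split.
have e20 : 0 < e / 2 by rewrite divr_gt0.
pose m := Num.truncn ((e / 2)^-1).
have rm : r_ m < e / 2.
  rewrite /r_ -[X in _ < X]invrK ltf_pV2 ?posrE ?invr_gt0 //.
  exact: Num.Theory.truncnS_gt.
have r0 : 0 < r_ m by rewrite /r_ invr_gt0.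
have hxr : x - r_ m < x + r_ m by rewrite ltrD2l gtrN.
have [q] := @rat_in_itvoo R _ _ hxr.
rewrite in_itv /= => /andP[h1 h2].
have bq : ball (ratr q : R) (r_ m) x.
  rewrite /ball /= ltr_norml; apply/andP; split; [rewrite ltrBrDl | rewrite ltrBlDr]; lra.
have sub : ball (ratr q : R) (r_ m) `<=` ball x e.
  move=> y; rewrite /ball /= => hy; move: bq; rewrite /ball /= => hx.
  have := ler_normB (x - ratr q) (y - ratr q).
  have -> : x - ratr q - (y - ratr q) = x - y by rewrite opprB addrA subrK.
  rewrite distrC in hx; rewrite distrC in hy; lra.
exists (pickle (q, m)) => //; exists q, m; split; first by rewrite pickleK.
split => //; apply/eqP; rewrite -measure_le0 -Fe le_measure ?inE //;
  exact: measurable_realfun.measurable_ball.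
Qed.

Lemma supp_full : F (supp F) = 1%E.
Proof.
have [N [mN N0 sN]] := negligible_bigcup G_negl.
have h : F (~` supp F) = 0%E.
  apply/eqP; rewrite -measure_le0 -N0 le_measure ?inE //.
    apply: measurableC; exact: supp_meas.
  exact: subset_trans cover sN.
by rewrite -[supp F]setCK probability_setC ?h ?sube0 //; apply: measurableC; exact: supp_meas.
Qed.
End Meas2.
Section Integ.
Context {R : realType} (F : probability R R).
Local Notation D := (supp F).

Definition good (f : R -> R) :=
  measurable_fun D f /\ exists M : R, forall x, D x -> `|f x| <= M.

Lemma good_int f : good f -> F.-integrable D (EFin \o f).
Proof.
move=> [mf [M hM]]; apply/integrableP; split; first exact/measurable_realfun.measurable_EFinP.
apply: (@le_lt_trans _ _ ((`|M|)%:E * F D)%E).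
  apply: integral_le_bound => //.
  - exact: supp_meas.
  - exact/measurable_realfun.measurable_EFinP.
  - apply: aeW => x Dx /=; rewrite lee_fin; apply: le_trans (hM x Dx) _.
    exact: ler_norm.
by rewrite supp_full mule1 ltry.
Qed.

Lemma good_cst r : good (fun _ => r).
Proof. by split; [exact: measurable_cst | exists `|r|]. Qed.

Lemma good_add f g : good f -> good g -> good (fun x => f x + g x).
Proof.
move=> [mf [M hM]] [mg [N hN]]; split; first exact: measurable_realfun.measurable_funD.
exists (M + N) => x Dx; apply: le_trans (ler_normD _ _) _.
by apply: lerD; [exact: hM | exact: hN].
Qed.

Lemma good_mul f g : good f -> good g -> good (fun x => f x * g x).
Proof.
move=> [mf [M hM]] [mg [N hN]]; split; first exact: measurable_realfun.measurable_funM.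
exists (M * N) => x Dx; rewrite normrM; apply: ler_pM => //.
  exact: hM.
exact: hN.
Qed.

Lemma good_ext f g : good f -> (forall x, D x -> f x = g x) -> good g.
Proof.
move=> [mf [M hM]] fg; split.
  apply: eq_measurable_fun mf => x; rewrite inE; exact: fg.
by exists M => x Dx; rewrite -fg //; exact: hM.
Qed.

Lemma EF_ext f g : (forall x, D x -> f x = g x) -> EF F f = EF F g.
Proof. move=> fg; apply: eq_Rintegral => x; rewrite inE; exact: fg. Qed.

Lemma EF_add f g : good f -> good g -> EF F (fun x => f x + g x) = EF F f + EF F g.
Proof. by move=> gf gg; apply: RintegralD; [exact: supp_meas|exact: good_int|exact: good_int]. Qed.

Lemma EF_scale r f : good f -> EF F (fun x => r * f x) = r * EF F f.
Proof. by move=> gf; apply: RintegralZl; [exact: supp_meas|exact: good_int]. Qed.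

Lemma EF_cst r : EF F (fun _ => r) = r.
Proof.
rewrite /EF (Rintegral_cst F (supp_meas F)).
transitivity (r * fine (1%E : \bar R)); last by rewrite mulr1.
by congr (_ * fine _); exact: supp_full.
Qed.

Lemma EF_ge0 f : (forall x, D x -> 0 <= f x) -> 0 <= EF F f.
Proof. exact: Rintegral_ge0. Qed.

Lemma EF_gt0 f (A : set R) : good f -> (forall x, D x -> 0 <= f x) ->
  measurable A -> A `<=` D -> (0 < F A)%E -> (forall x, A x -> 0 < f x) ->
  0 < EF F f.
Proof.
move=> gf f0 mA AD FA fA; rewrite lt_def EF_ge0 // andbT; apply/eqP => h0.
have fin := integrable_fin_num (supp_meas F) (good_int gf).
have i0 : (\int[F]_(x in D) (EFin \o f) x = 0)%E.
  by rewrite -[LHS]fineK //; rewrite /EF /Rintegral in h0; rewrite h0.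
have i0' : (\int[F]_(x in D) `|(EFin \o f) x| = 0)%E.
  rewrite -[RHS]i0; apply: eq_integral => x; rewrite inE => Dx.
  by rewrite /comp /abse ger0_norm // f0.
have := (ae_eq_integral_abs F (supp_meas F) (f := EFin \o f)).
case/(_ (proj2 (measurable_realfun.measurable_EFinP _ _) (proj1 gf))).
move=> + _ => /(_ i0') [N [mN N0 sN]].
have : (F A <= F N)%E.
  apply: le_measure; rewrite ?inE //.
  move=> x Ax; apply: sN => /= hx.
  by have := hx (AD x Ax); move=> [] /eqP; rewrite gt_eqF // fA.
by rewrite N0 => /(lt_le_trans FA); rewrite ltxx.
Qed.
End Integ.
Section Integ2.
Context {R : realType} (F : probability R R).
Local Notation D := (supp F).

Lemma good_sum (I : Type) (r : seq I) (f : I -> R -> R) :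
  (forall i, good F (f i)) -> good F (fun x => \sum_(i <- r) f i x).
Proof.
move=> gf; elim: r => [|i r IH].
  by apply: good_ext (good_cst F 0) _ => x _; rewrite big_nil.
apply: good_ext (good_add (gf i) IH) _ => x _; by rewrite big_cons.
Qed.

Lemma EF_sum (I : Type) (r : seq I) (f : I -> R -> R) :
  (forall i, good F (f i)) ->
  EF F (fun x => \sum_(i <- r) f i x) = \sum_(i <- r) EF F (f i).
Proof.
move=> gf; elim: r => [|i r IH].
  by rewrite big_nil (EF_ext (g := fun _ => 0)) ?EF_cst // => x _; rewrite big_nil.
rewrite big_cons -IH -EF_add //; last exact: good_sum.
by apply: EF_ext => x _; rewrite big_cons.
Qed.

Lemma EF_lin (al be : R) f g : good F f -> good F g ->
  EF F (fun x => al * f x + be * g x) = al * EF F f + be * EF F g.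
Proof.
move=> gf gg; rewrite EF_add ?EF_scale //.
- by apply: good_mul => //; exact: good_cst.
- by apply: good_mul => //; exact: good_cst.
Qed.

Lemma EF_sub f g : good F f -> good F g ->
  EF F (fun x => f x - g x) = EF F f - EF F g.
Proof.
move=> gf gg; rewrite (EF_ext (g := fun x => 1 * f x + (-1) * g x)).
  by rewrite EF_lin // mul1r mulN1r.
by move=> x _; rewrite mul1r mulN1r.
Qed.

Lemma good_id : compact D -> good F (fun x => x).
Proof.
move=> cD; split; first exact: measurable_id.
have [M [_ hM]] := compact_bounded cD.
by exists (M + 1) => x Dx; apply: (hM (M + 1)) => //; rewrite ltrDl.
Qed.

End Integ2.

Lemma opt_unique {R : realType} (c K z : R) : 0 < c -> 0 <= K ->
  (forall y, 0 <= y -> K * y - c / 2 * y ^+ 2 <= K * z - c / 2 * z ^+ 2) ->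
  z = K / c.
Proof.
move=> c0 K0 H.
have := H (K / c) (divr_ge0 K0 (ltW c0)).
have -> : K * (K / c) - c / 2 * (K / c) ^+ 2 = K ^+ 2 / (2 * c).
  by field; rewrite gt_eqF.
move=> h.
have h2 : (c * z - K) ^+ 2 <= 0.
  have e : (c * z - K) ^+ 2 = 2 * c * (K ^+ 2 / (2 * c) - (K * z - c / 2 * z ^+ 2)).
    by field; rewrite gt_eqF.
  rewrite e; apply: mulr_ge0_le0.
    by rewrite mulr_ge0 // ltW.
  by rewrite subr_le0.
have : c * z - K = 0.
  by apply/eqP; rewrite -sqrf_eq0 eq_le h2 sqr_ge0.
move/eqP; rewrite subr_eq0 => /eqP <-.
by field; rewrite gt_eqF.
Qed.
Lemma sum_ind {R : realType} (n : nat) (m : nat) (g : nat -> R) : (m < n)%N ->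
  \sum_(d < n) (if m == d then 1 else 0) * g d = g m.
Proof.
move=> hm; rewrite (bigD1 (Ordinal hm)) //= eqxx mul1r big1 ?addr0 //.
move=> i hi; case: eqP => [h|]; last by rewrite mul0r.
by exfalso; move/eqP: hi; apply; apply: val_inj; rewrite /= h.
Qed.

Section Spec.
Context {R : realType} (F : probability R R) (delta : R -> nat).
Local Notation D := (supp F).
Hypothesis mdelta : measurable_fun D (fun x => ((delta x)%:R : R)).

Lemma good_ind (d : nat) : good F (fun x => if delta x == d then (1 : R) else 0).
Proof.
split; last by exists 1 => x _; case: ifP; rewrite ?normr1 ?normr0.
have -> : (fun x => if delta x == d then (1 : R) else 0) =
   (fun x => if ((delta x)%:R : R) == d%:R then 1 else 0).
  by apply: funext => x; rewrite eqr_nat.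
apply: measurable_fun_if => //.
- exact: supp_meas.
- have := measurable_realfun.measurable_fun_eqr mdelta (measurable_cst (d%:R : R)).
  exact.
Qed.

Lemma meas_Dd (d : nat) : measurable (D `&` [set x | delta x = d]).
Proof.
have -> : D `&` [set x | delta x = d] =
  D `&` (fun x => ((delta x)%:R : R)) @^-1` [set d%:R].
  apply/seteqP; split => x [Dx h]; split => //=.
    by rewrite /= h.
  by apply/eqP; rewrite -(eqr_nat R); apply/eqP; exact: h.
apply: mdelta; first exact: supp_meas.
exact: measurable_set1.
Qed.

Lemma good_dR (n : nat) : (forall x, D x -> (delta x < n)%N) ->
  good F (fun x => ((delta x)%:R : R)).
Proof.
move=> hb; split => //; exists n%:R => x Dx.
by rewrite normr_nat ler_nat ltnW // hb.
Qed.

Lemma sum_p (n : nat) (g : nat -> R) : (forall x, D x -> (delta x < n)%N) ->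
  \sum_(d < n) EF F (fun x => if delta x == d then 1 else 0) * g d =
  EF F (fun x => g (delta x)).
Proof.
move=> hb.
transitivity (\sum_(d < n) EF F (fun x => g d * (if delta x == d then 1 else 0))).
  apply: eq_bigr => d _. rewrite EF_scale; last exact: good_ind.
  by rewrite mulrC.
rewrite -EF_sum; last first.
  move=> d; apply: good_mul; [exact: good_cst|exact: good_ind].
apply: EF_ext => x Dx.
rewrite -(@sum_ind R n (delta x) g (hb x Dx)).
by apply: eq_bigr => d _; rewrite mulrC.
Qed.
End Spec.
Lemma mono_alg {R : realType} (a m c k t1 t2 e1 e2 : R) :
  0 < c -> 0 < a * m -> t1 < t2 ->
  t1 * ((t1 + a * e2 * m) / c) + a * ((t1 + a * e2 * m) / c) * e2 * m
    - c / 2 * ((t1 + a * e2 * m) / c) ^+ 2 - k / 2 * e2 ^+ 2 <=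
  t1 * ((t1 + a * e1 * m) / c) + a * ((t1 + a * e1 * m) / c) * e1 * m
    - c / 2 * ((t1 + a * e1 * m) / c) ^+ 2 - k / 2 * e1 ^+ 2 ->
  t2 * ((t2 + a * e1 * m) / c) + a * ((t2 + a * e1 * m) / c) * e1 * m
    - c / 2 * ((t2 + a * e1 * m) / c) ^+ 2 - k / 2 * e1 ^+ 2 <=
  t2 * ((t2 + a * e2 * m) / c) + a * ((t2 + a * e2 * m) / c) * e2 * m
    - c / 2 * ((t2 + a * e2 * m) / c) ^+ 2 - k / 2 * e2 ^+ 2 ->
  e1 <= e2.
Proof.
move=> c0 am0 t12.
have V : forall t e, t * ((t + a * e * m) / c) + a * ((t + a * e * m) / c) * e * m
    - c / 2 * ((t + a * e * m) / c) ^+ 2 - k / 2 * e ^+ 2 =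
    (t + a * e * m) ^+ 2 / (2 * c) - k / 2 * e ^+ 2.
  by move=> t e; field; rewrite gt_eqF.
rewrite !V => h1 h2.
have h3 : ((t1 + a * e2 * m) ^+ 2 + (t2 + a * e1 * m) ^+ 2
          - (t1 + a * e1 * m) ^+ 2 - (t2 + a * e2 * m) ^+ 2) / (2 * c) <= 0.
  have -> : ((t1 + a * e2 * m) ^+ 2 + (t2 + a * e1 * m) ^+ 2
          - (t1 + a * e1 * m) ^+ 2 - (t2 + a * e2 * m) ^+ 2) / (2 * c) =
     ((t1 + a * e2 * m) ^+ 2 / (2 * c) - k / 2 * e2 ^+ 2)
     - ((t1 + a * e1 * m) ^+ 2 / (2 * c) - k / 2 * e1 ^+ 2)
     + (((t2 + a * e1 * m) ^+ 2 / (2 * c) - k / 2 * e1 ^+ 2)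
     - ((t2 + a * e2 * m) ^+ 2 / (2 * c) - k / 2 * e2 ^+ 2)).
    by field; rewrite gt_eqF.
  lra.
have h4 : (t1 + a * e2 * m) ^+ 2 + (t2 + a * e1 * m) ^+ 2
          - (t1 + a * e1 * m) ^+ 2 - (t2 + a * e2 * m) ^+ 2 <= 0.
  move: h3; set X := (_ - _ - _); move=> h3.
  have ic : 0 < (2 * c)^-1 by rewrite invr_gt0 mulr_gt0.
  by rewrite -(pmulr_lle0 X ic).
have e : (t1 + a * e2 * m) ^+ 2 + (t2 + a * e1 * m) ^+ 2
          - (t1 + a * e1 * m) ^+ 2 - (t2 + a * e2 * m) ^+ 2 =
          2 * (a * m) * ((t2 - t1) * (e1 - e2)) by ring.
rewrite e in h4.
have p2 : 0 < 2 * (a * m) by rewrite mulr_gt0.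
have p3 : 0 < t2 - t1 by rewrite subr_gt0.
rewrite (pmulr_rle0 _ p2) (pmulr_rle0 _ p3) in h4.
by rewrite -subr_le0.
Qed.

Lemma thresh {R : realType} (D : set R) (f : R -> R) (mu : R) :
  compact D -> D `<=` [set x | 0 <= x] ->
  (forall t1 t2, D t1 -> D t2 -> t1 <= t2 -> f t1 <= f t2) ->
  exists t0, forall x, D x -> 0 <= (f x - mu) * (x - t0) /\
    (f x != mu -> x != t0 -> 0 < (f x - mu) * (x - t0)).
Proof.
move=> cD Dnn fmono.
have [M [_ hM]] := compact_bounded cD.
have hM1 : forall x, D x -> x <= `|M| + 1.
  move=> x Dx; apply: le_trans (ler_norm x) _.
  apply: (hM (`|M| + 1)) => //.
  by apply: le_lt_trans (ler_norm M) _; rewrite ltrDl.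
pose T := [set -1] `|` [set x | D x /\ f x < mu].
have hsT : has_sup T.
  split; first by exists (-1); left.
  exists (`|M| + 1) => y [->|[Dy _]]; last exact: hM1.
  by apply: le_trans (_ : 0 <= _); rewrite ?lerN10 ?addr_ge0.
exists (sup T) => x Dx.
have x0 := Dnn x Dx; rewrite /= in x0.
have [xlt|xgt|xeq] := ltgtP x (sup T).
- have xt : 0 < sup T - x by rewrite subr_gt0.
  have [e Te he] := sup_adherent xt hsT.
  rewrite opprB addrC subrK in he.
  case: Te => [/= e1|[De fe]].
    by move: he; rewrite e1 => /(le_lt_trans x0); rewrite ltr0N1.
  have fx : f x < mu := le_lt_trans (fmono x e Dx De (ltW he)) fe.
  have p : 0 < (f x - mu) * (x - sup T).
    by rewrite nmulr_rgt0 ?subr_lt0.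
  by split => //; rewrite ltW.
- have fx : mu <= f x.
    rewrite leNgt; apply/negP => fx.
    have := sup_upper_bound hsT (or_intror (conj Dx fx) : T x).
    by rewrite leNgt xgt.
  split; first by rewrite mulr_ge0 // subr_ge0 // ltW.
  move=> fmu _; rewrite mulr_gt0 // subr_gt0 //.
  by rewrite lt_neqAle fx andbT eq_sym.
- by rewrite xeq subrr mulr0; split => // _; rewrite eqxx.
Qed.
Lemma opt_game {R : realType} (c a t d Q z : R) : 0 < c -> 0 <= t -> 0 <= a ->
  0 <= d -> 0 <= Q ->
  (forall y, 0 <= y -> t * y + a * y * d * Q - c / 2 * y ^+ 2 <=
                       t * z + a * z * d * Q - c / 2 * z ^+ 2) ->
  z = (t + a * d * Q) / c.
Proof.
move=> c0 t0 a0 d0 Q0 H; apply: opt_unique => //.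
  by apply: addr_ge0 => //; apply: mulr_ge0 => //; apply: mulr_ge0.
by move=> y y0; have := H y y0; lra.
Qed.

Unset Implicit Arguments.

Theorem proposition4 (R : realType) (n : nat) (a phi c k : R)
  (F : probability R R) (delta : R -> nat) (xi : R -> R)
  (x_friend_perp x_soc_end x_soc_perp : R -> nat -> R) :
  (2 <= n)%N -> 0 < a -> a * (n.-1)%:R < c -> a * (n.-1)%:R < k ->
  (forall x : R, F [set x] = 0%E) ->
  compact (supp F) ->
  supp F `<=` [set x | 0 <= x] ->
  end_friend_eq n a c k phi F delta xi ->
  two_degrees F delta ->
  friend_eq n a c F (EQ_perp n F delta) x_friend_perp ->
  soc_eq n a c F (EQ_end F delta) x_soc_end ->
  soc_eq n a c F (EQ_perp n F delta) x_soc_perp ->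
  (forall t1 t2, supp F t1 -> supp F t2 -> t1 <= t2 ->
     (delta t1 <= delta t2)%N) /\
  (forall t, supp F t -> (0 < delta t)%N ->
     [/\ x_friend_perp t (delta t) < xi t,
         x_soc_end t (delta t) < x_friend_perp t (delta t) &
         x_soc_end t (delta t) = x_soc_perp t (delta t)]).
Proof.
move=> hn ha hc hk hatom hcomp hnn heq h2 hfp hse hsp.
case: heq => -[mdelta mxi] [Mxi hMxi] hdx Edpos hopt.
have n10 : 0 <= (n.-1)%:R :> R by [].
have c0 : 0 < c by apply: le_lt_trans hc; rewrite mulr_ge0 // ltW.
have k0 : 0 < k by apply: le_lt_trans hk; rewrite mulr_ge0 // ltW.
have hb : forall x, supp F x -> (delta x < n)%N := fun x Dx => (hdx x Dx).1.
have xi0 : forall x, supp F x -> 0 <= xi x := fun x Dx => (hdx x Dx).2.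
have dle : forall x, supp F x -> ((delta x)%:R : R) <= (n.-1)%:R.
  by move=> x Dx; rewrite ler_nat -ltnS prednK ?hb // (leq_trans _ hn).
have gd := good_dR mdelta hb.
have gxi : good F xi by split => //; exists Mxi.
have gid := good_id hcomp.
have gd2 : good F (fun x => ((delta x)%:R : R) ^+ 2).
  by apply: good_ext (good_mul gd gd) _ => x _; rewrite expr2.
have gdid : good F (fun x => ((delta x)%:R : R) * x) by exact: good_mul.
have gdxi : good F (fun x => ((delta x)%:R : R) * xi x) by exact: good_mul.
set Ed := EF F (fun x => ((delta x)%:R : R)) in Edpos *.
set Eth := EF F (fun x => x).
set Ed2 := EF F (fun x => ((delta x)%:R : R) ^+ 2).
set Edth := EF F (fun x => ((delta x)%:R : R) * x).
set m := Etil F delta xi.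
have m0 : 0 <= m.
  rewrite /m /Etil; apply: divr_ge0; last exact: ltW.
  by apply: EF_ge0 => x Dx; rewrite mulr_ge0 ?xi0.
have xiE : forall t, supp F t -> xi t = (t + a * (delta t)%:R * m) / c.
  move=> t Dt; apply: opt_unique => //.
    have t0 : 0 <= t := hnn t Dt.
    apply: addr_ge0 => //; apply: mulr_ge0 => //; apply: mulr_ge0 => //; exact: ltW.
  move=> y y0; have := hopt t Dt (delta t) y (hb t Dt) y0.
  rewrite /payoff_end -/m; lra.
have n0 : (0 < n)%N by apply: leq_trans hn.
have mpos : 0 < m.
  rewrite lt_def m0 andbT; apply/negP => /eqP m_0.
  have dz : forall t, supp F t -> ((delta t)%:R : R) = 0.
    move=> t Dt; have := hopt t Dt 0 (xi t) n0 (xi0 t Dt).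
    rewrite /payoff_end -/m m_0 => h.
    have : k / 2 * ((delta t)%:R) ^+ 2 <= 0 :> R by lra.
    rewrite pmulr_rle0 ?divr_gt0 // => hs.
    by apply/eqP; rewrite -sqrf_eq0 eq_le hs sqr_ge0.
  move: Edpos; rewrite /Ed (EF_ext (g := fun _ => 0)) ?EF_cst ?ltxx //.
have yge0 : forall t d, supp F t -> 0 <= (t + a * (d%:R : R) * m) / c.
  move=> t d Dt; have t0 : 0 <= t := hnn t Dt.
  apply: divr_ge0; last exact: ltW.
  apply: addr_ge0 => //; apply: mulr_ge0 => //; apply: mulr_ge0 => //; exact: ltW.
have mono : forall t1 t2, supp F t1 -> supp F t2 -> t1 <= t2 ->
    (delta t1 <= delta t2)%N.
  move=> t1 t2 D1 D2; rewrite le_eqVlt => /predU1P [->//|t12].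
  rewrite -(ler_nat R).
  apply: (@mono_alg R a m c k t1 t2) => //.
  - by rewrite mulr_gt0.
  - have := hopt t1 D1 (delta t2) _ (hb t2 D2) (yge0 t1 (delta t2) D1).
    by rewrite /payoff_end -/m (xiE t1 D1); lra.
  - have := hopt t2 D2 (delta t1) _ (hb t1 D1) (yge0 t2 (delta t1) D2).
    by rewrite /payoff_end -/m (xiE t2 D2); lra.
have gc : forall r : R, good F (fun _ => r) := good_cst F.
have Edle : Ed <= (n.-1)%:R.
  have : 0 <= EF F (fun x => (n.-1)%:R - ((delta x)%:R : R)).
    by apply: EF_ge0 => x Dx; rewrite subr_ge0 dle.
  by rewrite EF_sub // EF_cst subr_ge0.
have Ed2le : Ed2 <= (n.-1)%:R * Ed.
  have : 0 <= EF F (fun x => (n.-1)%:R * ((delta x)%:R : R) - ((delta x)%:R : R) ^+ 2).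
    apply: EF_ge0 => x Dx; rewrite expr2 -mulrBl mulr_ge0 //.
    by rewrite subr_ge0 dle.
  by rewrite EF_sub ?EF_scale ?subr_ge0 //; apply: good_mul.
have Eq1 : m * Ed = c^-1 * Edth + (a * m / c) * Ed2.
  have -> : m * Ed = EF F (fun x => ((delta x)%:R : R) * xi x).
    by rewrite /m /Etil -/Ed divfK // gt_eqF.
  rewrite -EF_lin //; apply: EF_ext => x Dx; rewrite xiE //.
  by rewrite /GRing.exp /=; field; rewrite gt_eqF.
case: hse => -[mze bze ze0] hoze.
set M := EQ_end F delta x_soc_end.
have M0 : 0 <= M by apply: EF_ge0 => x Dx; apply: ze0 => //; exact: hb.
have zeE : forall t d, supp F t -> (d < n)%N ->
    x_soc_end t d = (t + a * d%:R * M) / c.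
  move=> t d Dt hd; apply: opt_game => //; [exact: hnn|exact: ltW|].
  exact: hoze.
have Eq3 : M = c^-1 * Eth + (a * M / c) * Ed.
  rewrite {1}/M /EQ_end -EF_lin //; apply: EF_ext => x Dx; rewrite zeE //; last exact: hb.
  by field; rewrite gt_eqF.
case: hsp => -[mzp bzp zp0] hozp.
set M' := EQ_perp n F delta x_soc_perp.
have pge0 : forall d : nat, 0 <= EF F (fun x => if delta x == d then 1 else 0).
  by move=> d; apply: EF_ge0 => x _; case: ifP.
have M'0 : 0 <= M'.
  apply: sumr_ge0 => d _; apply: mulr_ge0 => //.
  by apply: EF_ge0 => x Dx; apply: zp0.
have zpE : forall t d, supp F t -> (d < n)%N ->
    x_soc_perp t d = (t + a * d%:R * M') / c.
  move=> t d Dt hd; apply: opt_game => //; [exact: hnn|exact: ltW|].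
  exact: hozp.
have Eq4 : M' = c^-1 * Eth + (a * M' / c) * Ed.
  rewrite {1}/M' /EQ_perp.
  rewrite (eq_bigr (fun d : 'I_n => EF F (fun x => if delta x == d then 1 else 0) *
      (c^-1 * Eth + (a * M' / c) * (d : nat)%:R))); last first.
    move=> d _; congr (_ * _).
    rewrite (EF_ext (g := fun x => c^-1 * x + (a * (d : nat)%:R * M' / c) * 1)).
      by rewrite EF_lin // EF_cst mulr1 (_ : EF F id = Eth) //; ring.
    by move=> x Dx; rewrite zpE //; field; rewrite gt_eqF.
  rewrite (sum_p mdelta (fun d => c^-1 * Eth + a * M' / c * d%:R) hb).
  rewrite (EF_ext (g := fun x => (c^-1 * Eth) * 1 + (a * M' / c) * (delta x)%:R)).
    by rewrite EF_lin // EF_cst mulr1.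
  by move=> x _; rewrite mulr1.
case: hfp => -[mzf bzf zf0] hozf.
set m' := EQtil (EQ_perp n F delta) x_friend_perp.
have den : EQ_perp n F delta (fun _ d => d%:R) = Ed.
  rewrite /EQ_perp (eq_bigr (fun d : 'I_n =>
     EF F (fun x => if delta x == d then 1 else 0) * (d : nat)%:R)).
    exact: (sum_p mdelta (fun d => d%:R) hb).
  by move=> d _; rewrite EF_cst.
set num := EQ_perp n F delta (fun x d => d%:R * x_friend_perp x d).
have m'E : m' = num / Ed by rewrite /m' /EQtil den.
have num0 : 0 <= num.
  apply: sumr_ge0 => d _; apply: mulr_ge0 => //.
  by apply: EF_ge0 => x Dx; rewrite mulr_ge0 // zf0.
have m'0 : 0 <= m' by rewrite m'E divr_ge0 // ltW.
have zfE : forall t d, supp F t -> (d < n)%N ->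
    x_friend_perp t d = (t + a * d%:R * m') / c.
  move=> t d Dt hd; apply: opt_game => //; [exact: hnn|exact: ltW|].
  exact: hozf.
have Eq2 : m' * Ed = (c^-1 * Eth) * Ed + (a * m' / c) * Ed2.
  rewrite {1}m'E divfK ?gt_eqF // /num /EQ_perp.
  rewrite (eq_bigr (fun d : 'I_n => EF F (fun x => if delta x == d then 1 else 0) *
      ((c^-1 * Eth) * (d : nat)%:R + (a * m' / c) * (d : nat)%:R ^+ 2))); last first.
    move=> d _; congr (_ * _).
    rewrite (EF_ext (g := fun x => ((d : nat)%:R / c) * x + (a * (d : nat)%:R ^+ 2 * m' / c) * 1)).
      by rewrite EF_lin // EF_cst mulr1 (_ : EF F id = Eth) //; ring.
    by move=> x Dx; rewrite zfE //; field; rewrite gt_eqF.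
  rewrite (sum_p mdelta (fun d => (c^-1 * Eth) * d%:R + (a * m' / c) * d%:R ^+ 2) hb).
  by rewrite (EF_lin (c^-1 * Eth) (a * m' / c) gd gd2).
have Fpt : forall (B : set R) t, measurable B -> F (B `\` [set t]) = F B.
  move=> B t mB.
  have h0 : F (B `&` [set t]) = 0%E.
    apply/eqP; rewrite -measure_le0 -(hatom t) le_measure ?inE //.
    exact: measurableI.
  transitivity (F (B `\` [set t]) + F (B `&` [set t]))%E.
    by rewrite h0 adde0.
  by symmetry; exact: (measureDI F mB (measurable_set1 t)).
have mD := supp_meas F.
have EthP : 0 < Eth.
  apply: (EF_gt0 (A := supp F `\` [set 0])) => //.
  - by apply: measurableD.
  - by rewrite Fpt // supp_full lte01.
  - move=> x [Dx nx]; rewrite lt_def (hnn x Dx) andbT; apply/eqP => x0.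
    by apply: nx; rewrite x0.
case: h2 => d1 [d2 [d12 [P1 P2]]].
have [di [Pi hdi]] : exists di, (0 < F (supp F `&` [set x | delta x = di]))%E
    /\ (di%:R : R) != Ed.
  case: (eqVneq (d1%:R : R) Ed) => [e1|ne1]; last by exists d1.
  exists d2; split => //; apply/eqP => e2; apply: d12; apply/eqP.
  by rewrite -(eqr_nat R) e1 e2.
have mB := meas_Dd mdelta di.
have gdm : good F (fun x => ((delta x)%:R : R) - Ed) := good_add gd (gc (- Ed)).
have VarP : 0 < Ed2 - Ed ^+ 2.
  have -> : Ed2 - Ed ^+ 2 = EF F (fun x => (((delta x)%:R : R) - Ed) ^+ 2).
    rewrite (EF_ext (g := fun x => (1 * ((delta x)%:R : R) ^+ 2
                  + (- (2 * Ed)) * (delta x)%:R) + Ed ^+ 2)); last by move=> x _; ring.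
    have g1 : good F (fun x => 1 * ((delta x)%:R : R) ^+ 2
                  + (- (2 * Ed)) * (delta x)%:R).
      by apply: good_add; apply: good_mul => //; exact: gc.
    rewrite (EF_add g1 (gc _)) (EF_lin _ _ gd2 gd) EF_cst -/Ed -/Ed2; ring.
  apply: (EF_gt0 (A := supp F `&` [set x | delta x = di])) => //.
  - by apply: good_ext (good_mul gdm gdm) _ => x _; rewrite expr2.
  - by move=> x _; rewrite sqr_ge0.
  - move=> x [Dx /= ->]; rewrite lt_def sqr_ge0 andbT sqrf_eq0 subr_eq0.
    exact: hdi.
have dmono : forall t1 t2, supp F t1 -> supp F t2 -> t1 <= t2 ->
    ((delta t1)%:R : R) <= (delta t2)%:R.
  by move=> t1 t2 D1 D2 t12; rewrite ler_nat mono.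
have [t0 ht0] := thresh Ed hcomp hnn dmono.
have CovP : 0 < Edth - Ed * Eth.
  have -> : Edth - Ed * Eth = EF F (fun x => (((delta x)%:R : R) - Ed) * (x - t0)).
    rewrite (EF_ext (g := fun x => (1 * (((delta x)%:R : R) * x) + (- t0) * (delta x)%:R)
                  + ((- Ed) * x + (Ed * t0) * 1))); last by move=> x _; ring.
    have g1 : good F (fun x => 1 * (((delta x)%:R : R) * x) + (- t0) * (delta x)%:R).
      by apply: good_add; apply: good_mul => //; exact: gc.
    have g2 : good F (fun x => (- Ed) * x + (Ed * t0) * 1).
      by apply: good_add; apply: good_mul => //; exact: gc.
    rewrite (EF_add g1 g2) (EF_lin _ _ gdid gd) (EF_lin _ _ gid (gc 1)) EF_cst.
    rewrite -/Ed -/Edth (_ : EF F id = Eth) //; ring.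
  apply: (EF_gt0 (A := (supp F `&` [set x | delta x = di]) `\` [set t0])) => //.
  - by apply: good_mul => //; apply: good_add => //; exact: gc.
  - by move=> x Dx; case: (ht0 x Dx).
  - by apply: measurableD.
  - by move=> x [[]].
  - by rewrite Fpt.
  - move=> x [[Dx dx] nx]; case: (ht0 x Dx) => _; apply.
      by rewrite dx.
    by apply/eqP => e; apply: nx; rewrite e.
set Den := c * Ed - a * Ed2.
set Den2 := c - a * Ed.
have DenP : 0 < Den.
  rewrite /Den subr_gt0; apply: (le_lt_trans (y := a * ((n.-1)%:R * Ed))).
    by rewrite ler_pM2l.
  by rewrite mulrA ltr_pM2r.
have Den2P : 0 < Den2.
  rewrite /Den2 subr_gt0; apply: le_lt_trans hc.
  by rewrite ler_pM2l.
have e1 : m * Den = Edth.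
  have -> : m * Den = c * (m * Ed) - a * m * Ed2 by rewrite /Den; ring.
  by rewrite Eq1; field; rewrite gt_eqF.
have e2 : m' * Den = Ed * Eth.
  have -> : m' * Den = c * (m' * Ed) - a * m' * Ed2 by rewrite /Den; ring.
  by rewrite Eq2; field; rewrite gt_eqF.
have e3 : M * Den2 = Eth.
  have -> : M * Den2 = c * M - a * M * Ed by rewrite /Den2; ring.
  by rewrite {1}Eq3; field; rewrite gt_eqF.
have e4 : M' * Den2 = Eth.
  have -> : M' * Den2 = c * M' - a * M' * Ed by rewrite /Den2; ring.
  by rewrite {1}Eq4; field; rewrite gt_eqF.
have MM' : M = M'.
  have : (M - M') * Den2 = 0 by rewrite mulrBl e3 e4 subrr.
  by move/eqP; rewrite mulf_eq0 (gt_eqF Den2P) orbF subr_eq0 => /eqP.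
have mm' : m' < m.
  have : 0 < (m - m') * Den by rewrite mulrBl e1 e2.
  by rewrite pmulr_lgt0 // subr_gt0.
have m'M : M < m'.
  have : 0 < (m' - M) * (Den * Den2).
    have -> : (m' - M) * (Den * Den2) = (m' * Den) * Den2 - (M * Den2) * Den by ring.
    rewrite e2 e3 /Den /Den2.
    have -> : Ed * Eth * (c - a * Ed) - Eth * (c * Ed - a * Ed2) =
              a * Eth * (Ed2 - Ed ^+ 2) by ring.
    by rewrite !mulr_gt0.
  by rewrite pmulr_lgt0 ?mulr_gt0 // subr_gt0.
split; first exact: mono.
move=> t Dt dt0.
have dpos : 0 < a * ((delta t)%:R : R) by rewrite mulr_gt0 // ltr0n.
have ic : 0 < c^-1 by rewrite invr_gt0.
rewrite zfE ?hb // xiE // zeE ?hb // zpE ?hb // -MM'.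
split => //.
- by rewrite ltr_pM2r // ltrD2l ltr_pM2l.
- by rewrite ltr_pM2r // ltrD2l ltr_pM2l.
Qed.
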